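(* Let $\pi:L_{\mathcal F}\to L_{\mathcal G}$ satisfy (REG). For every $Y\in L^0(\Omega,\mathcal G,\mathbb P)$ and $\xi'\in L^*_{\mathcal F}\cap(L^1_{\mathcal F})_+$, with $\mu$ the measure $d\mu/d\mathbb P=\xi'$, the set \[\mathcal A(Y,\xi'):=\{\pi(\xi)\mid \xi\in L_{\mathcal F},\ E_{\mathbb P}[\xi'\xi\mid\mathcal G]\ge_\mu Y\}\] is downward directed; consequently there exists a sequence $(\eta_m)_{m\ge1}\subseteq L_{\mathcal F}$ with $E_{\mathbb P}[\xi'\eta_m\mid\mathcal G]\ge_\mu Y$ for all $m$ and $\pi(\eta_m)\downarrow R(Y,\xi')$ as $m\uparrow\infty$, where $R(Y,\xi'):=\inf\mathcal A(Y,\xi')$.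
   Context: Let $(\Omega,\mathcal F,\mathbb P)$ be a probability space and $\mathcal G\subseteq\mathcal F$ a sub-$\sigma$-algebra. (In)equalities hold $\mathbb P$-a.s. unless a measure is indicated ($\ge_\mu$ means $\mu$-a.e.); $\inf$ is the $\mathbb P$-essential infimum. $L_{\mathcal F}\subseteq L^0(\Omega,\mathcal F,\mathbb P)$, $L_{\mathcal G}\subseteq L^0(\Omega,\mathcal G,\mathbb P)$ are vector lattices closed under multiplication by indicators of $\mathcal F$- (resp. $\mathcal G$-) measurable sets; the order continuous dual $L^*_{\mathcal F}$ of $(L_{\mathcal F},\ge)$ is a lattice contained in $L^1_{\mathcal F}=L^1(\Omega,\mathcal F,\mathbb P)$ (functionals $X\mapsto E_{\mathbb P}[ZX]$), closed under multiplication by indicators of sets in $\mathcal F$. (REG): $\pi(X\mathbf 1_A+Y\mathbf 1_{A^c})=\pi(X)\mathbf 1_A+\pi(Y)\mathbf 1_{A^c}$ for all $X,Y\in L_{\mathcal F}$, $A\in\mathcal G$. A set of random variables is downward directed if for any two of its elements there is an element of the set below both. *)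

(* Defs.v *)
From HB Require Import structures.
From mathcomp Require Import all_boot all_order all_algebra.
From mathcomp Require Import all_classical all_reals all_analysis.
From mathcomp Require Import measurable_realfun.
Set Implicit Arguments. Unset Strict Implicit. Unset Printing Implicit Defensive.
Import Order.TTheory GRing.Theory Num.Theory.
Import numFieldNormedType.Exports.
Local Open Scope classical_set_scope.
Local Open Scope ring_scope.

(* Random variables are represented by functions T -> R; equalities and
   inequalities between them are taken P-a.s. (via {ae P, ...}). *)

Section Defs.
Context {d : measure_display} {T : measurableType d} {R : realType}.
Variable P : probability T R.

Definition is_subsigma (G : set (set T)) :=
  sigma_algebra setT G /\ (forall A, G A -> measurable A).

Definition Gmeasurable (G : set (set T)) (f : T -> R) :=
  forall B : set R, measurable B -> G (f @^-1` B).


(* a subset of L^0 (as a.s.-saturated set of measurable functions w.r.t. the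
   sigma-algebra M) which is a vector lattice closed under multiplication by
   indicators of sets of M *)
Definition vlattice_ind (M : set (set T)) (L : set (T -> R)) :=
  [/\ (forall X, L X -> Gmeasurable M X),
      (forall X Y, L X -> Gmeasurable M Y -> ({ae P, forall x, X x = Y x}) -> L Y),
      [/\ L (fun=> 0), (forall X Y, L X -> L Y -> L (X \+ Y)) &
          (forall (c : R) X, L X -> L (fun x => c * X x))],
      (forall X Y, L X -> L Y -> L (fun x => Num.max (X x) (Y x))) &
      (forall X A, L X -> M A -> L (fun x => indic A x * X x))].

Definition le_as (X Y : T -> R) := {ae P, forall x, X x <= Y x}.

Definition down_directed (S : set (T -> R)) :=
  forall X1 X2, S X1 -> S X2 -> exists2 X3, S X3 & le_as X3 X1 /\ le_as X3 X2.

(* order continuous dual of (LF, >=), represented (as in the paper) by the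
   densities Z in L^1 with X |-> E_P[Z X]; order continuity: for every
   downward directed D in LF with infimum 0 in LF, inf_{X in D} |E[ZX]| = 0 *)
Definition ocdual (LF : set (T -> R)) : set (T -> R) :=
  [set Z | [/\ measurable_fun setT Z,
     P.-integrable setT (EFin \o Z),
     (forall X, LF X -> P.-integrable setT (EFin \o (Z \* X))) &
     (forall D : set (T -> R), D `<=` LF -> down_directed D ->
        (forall X, D X -> le_as (fun=> 0) X) ->
        (forall W, LF W -> (forall X, D X -> le_as W X) -> le_as W (fun=> 0)) ->
        ereal_inf [set `| \int[P]_x ((Z x * X x)%:E) |%E | X in D] = 0%E)]].

Definition is_condexp (G : set (set T)) (X C : T -> R) :=
  [/\ Gmeasurable G C, P.-integrable setT (EFin \o C) &
     forall A, G A -> (\int[P]_(x in A) (C x)%:E = \int[P]_(x in A) (X x)%:E)%E].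

Definition dens_measure (xi' : T -> R) (A : set T) : \bar R :=
  (\int[P]_(x in A) (xi' x)%:E)%E.

Definition ae_wrt (mu : set T -> \bar R) (Q : T -> Prop) :=
  exists N, [/\ measurable N, mu N = 0%E & ~` [set x | Q x] `<=` N].

Definition is_essinf (S : set (T -> R)) (Z : T -> \bar R) :=
  [/\ measurable_fun setT Z,
      (forall X, S X -> {ae P, forall x, (Z x <= (X x)%:E)%E}) &
      (forall W : T -> \bar R, measurable_fun setT W ->
         (forall X, S X -> {ae P, forall x, (W x <= (X x)%:E)%E}) ->
         {ae P, forall x, (W x <= Z x)%E})].

Definition Aset (G : set (set T)) (LF : set (T -> R)) (pi : (T -> R) -> (T -> R))
  (Y xi' : T -> R) : set (T -> R) :=
  [set Z | exists xi, [/\ LF xi, Z = pi xi &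
     exists C, is_condexp G (xi' \* xi) C /\
       ae_wrt (dens_measure xi') (fun x => Y x <= C x)]].

End Defs.

(* Main.v *)
Set Warnings "-all".
Require Import Defs.
From HB Require Import structures.
From mathcomp Require Import all_boot all_order all_algebra.
From mathcomp Require Import all_classical all_reals all_analysis.
From mathcomp Require Import measurable_realfun.
From mathcomp Require Import lra.
Import Order.TTheory GRing.Theory Num.Theory.
Import numFieldNormedType.Exports.
Local Open Scope classical_set_scope.
Local Open Scope ring_scope.

Fixpoint yseq {A : Type} (nx : A -> A -> A) (Xs : nat -> A) (n : nat) : A :=
  match n with 0%N => Xs 0%N | k.+1 => nx (yseq nx Xs k) (Xs k.+1) end.

Section Essinf.
Context {d : measure_display} {T : measurableType d} {R : realType}.
Variable P : probability T R.

Definition fa (t : R) : R := atan t + pi / 2.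

Lemma fa_ge0 t : 0 <= fa t.
Proof. have := atan_gtNpi2 t; rewrite /fa; lra. Qed.

Lemma fa_le t : fa t <= pi.
Proof. have := atan_ltpi2 t; rewrite /fa; lra. Qed.

Lemma fa_mono s t : s <= t -> fa s <= fa t.
Proof. by move=> h; rewrite /fa lerD2r le_atan. Qed.

Lemma fa_lt s t : s < t -> fa s < fa t.
Proof. by move=> h; rewrite /fa ltrD2r lt_atan. Qed.

Lemma mfa (X : T -> R) : measurable_fun setT X ->
  measurable_fun setT (fun x => (fa (X x))%:E).
Proof.
move=> mX; apply/measurable_EFinP.
apply: (measurable_funD (measurableT_comp _ mX) (measurable_cst _)).
apply: continuous_measurable_fun => t; exact: continuous_atan.
Qed.

Lemma mfaR (X : T -> R) : measurable_fun setT X ->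
  measurable_fun setT (fun x => fa (X x)).
Proof. by move=> mX; apply/measurable_EFinP; exact: mfa. Qed.

Lemma inv_lt_of (a b : R) : 0 < a -> 0 < b -> a^-1 < b -> b^-1 < a.
Proof. by move=> a0 b0 h; rewrite -(invrK a) ltf_pV2 ?posrE ?invr_gt0. Qed.

Definition phi (X : T -> R) := (\int[P]_x (fa (X x))%:E)%E.

Lemma phi_ge0 X : (0 <= phi X)%E.
Proof. by apply: integral_ge0 => x _; rewrite lee_fin fa_ge0. Qed.

Lemma phi_le X : measurable_fun setT X -> (phi X <= pi%:E)%E.
Proof.
move=> mX; rewrite /phi.
apply: (@le_trans _ _ (\int[P]_x (cst pi%:E x))%E).
  apply: ge0_le_integral => //; first by move=> x _; rewrite lee_fin fa_ge0.
  - exact: mfa.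
  - by move=> x _; rewrite lee_fin fa_le.
rewrite integral_cst //; rewrite -[leRHS]mule1; apply: lee_wpmul2l; [by rewrite lee_fin pi_ge0 | exact: probability_le1].
Qed.

Lemma phi_mono (X X' : T -> R) : measurable_fun setT X -> measurable_fun setT X' ->
  {ae P, forall x, X x <= X' x} -> (phi X <= phi X')%E.
Proof.
move=> mX mX' h; apply: ae_ge0_le_integral => //.
- by move=> x _; rewrite lee_fin fa_ge0.
- exact: mfa.
- by move=> x _; rewrite lee_fin fa_ge0.
- exact: mfa.
- by apply: filterS h => x h _; rewrite lee_fin fa_mono.
Qed.


Lemma measurable_ler_set (f g : T -> R) : measurable_fun setT f ->
  measurable_fun setT g -> measurable [set x | f x <= g x].
Proof.
move=> mf mg.
have := measurable_fun_ler mf mg measurableT (Y:=[set true]) I.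
by rewrite setTI preimage_true.
Qed.

Lemma essinf_seq (S : set (T -> R)) :
  (forall X, S X -> measurable_fun setT X) -> down_directed P S -> S !=set0 ->
  exists Y : nat -> T -> R,
   [/\ forall n, S (Y n), {ae P, forall x, forall m, Y m.+1 x <= Y m x} &
     exists Rinf, is_essinf P S Rinf /\
       {ae P, forall x, (fun m => (Y m x)%:E) @ \oo --> Rinf x}].
Proof.
move=> mS dS [X0 SX0].
set m := ereal_inf [set phi X | X in S].
have m_ge0 : (0 <= m)%E by apply: le_ereal_inf_tmp => _ [X _ <-]; exact: phi_ge0.
have m_le : (m <= pi%:E)%E.
  have h0 := phi_le _ (mS _ SX0); apply: le_trans h0; by apply: ereal_inf_lbound; exists X0.
have mfin : m \is a fin_num.
  by rewrite ge0_fin_numE // (le_lt_trans m_le) // ltry.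
have [mr mE] : exists mr, m = mr%:E by apply/EFin_fin_numP.
have adh : forall n : nat, exists X, S X /\ (phi X < (mr + n.+1%:R^-1)%:E)%E.
  move=> n; have hn : 0 < n.+1%:R^-1 :> R by rewrite invr_gt0.
  have [_ [X SX <-] h] := lb_ereal_inf_adherent hn mfin.
  by exists X; split => //; rewrite EFinD -mE.
have [Xs HXs] := choice adh.
have nxP : forall p : (T -> R) * (T -> R), exists X3,
    S p.1 -> S p.2 -> [/\ S X3, le_as P X3 p.1 & le_as P X3 p.2].
  move=> [X1 X2]; have [[h1 h2]|h] := pselect (S X1 /\ S X2).
    by have [X3 SX3 [l1 l2]] := dS _ _ h1 h2; exists X3.
  by exists X1 => h1 h2; exfalso; exact: h.
have [nx Hnx] := choice nxP.
pose Y := yseq (fun a b => nx (a, b)) Xs.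
have SY : forall n, S (Y n).
  elim=> [|n IH]; first exact: (HXs 0%N).1.
  by have [] := Hnx (Y n, Xs n.+1) IH (HXs _).1.
have leY : forall n, le_as P (Y n.+1) (Y n) /\ le_as P (Y n.+1) (Xs n.+1).
  by move=> n; have [] := Hnx (Y n, Xs n.+1) (SY n) (HXs _).1.
have phiY : forall n, (phi (Y n) < (mr + n.+1%:R^-1)%:E)%E.
  case=> [|n]; first exact: (HXs 0%N).2.
  apply: le_lt_trans (HXs n.+1).2.
  by apply: phi_mono; [exact: mS|exact: mS (HXs _).1|exact: (leY n).2].
pose Rinf x := ereal_inf (range (fun n => (Y n x)%:E)).
exists Y; split => //.
  exact: ae_foralln (fun n => (leY n).1).
exists Rinf; split; last first.
  apply: filterS (ae_foralln (fun n => (leY n).1)) => x hdec.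
  apply: ereal_nonincreasing_cvgn; apply/nonincreasing_seqP => n.
  by rewrite lee_fin; exact: hdec.
split.
- have := measurable_fun_einfs (f := fun n x => (Y n x)%:E) _ 0%N.
  have -> : (fun x => einfs (fun n => (Y n x)%:E) 0%N) = Rinf.
    apply/funext => x; rewrite /einfs /= /Rinf; congr ereal_inf.
    by apply/seteqP; split => _ [k _ <-]; exists k.
  apply => n; apply/measurable_EFinP; exact: mS.
- move=> X SX.
  pose B k := [set x | forall n, fa (X x) + k.+1%:R^-1 <= fa (Y n x)].
  have mB : forall k, measurable (B k).
    move=> k.
    have -> : B k = \bigcap_(n in setT)
        [set x | fa (X x) + k.+1%:R^-1 <= fa (Y n x)].
      by apply/seteqP; split => x /= h n; [move=> _; exact: h | exact: h].
    apply: bigcap_measurable => [|n _]; first by exists 0%N.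
    apply: measurable_ler_set; last exact: mfaR (mS _ (SY n)).
    apply: (@measurable_funD _ _ _ _ (fun x => fa (X x)) (fun=> k.+1%:R^-1)).
      exact: mfaR (mS _ SX).
    exact: measurable_cst.
  have PB : forall k, P (B k) = 0%E.
    move=> k; set c := k.+1%:R^-1 : R.
    have c_gt0 : 0 < c by rewrite invr_gt0.
    have PBfin : P (B k) \is a fin_num.
      rewrite ge0_fin_numE ?measure_ge0 //.
      exact: le_lt_trans (probability_le1 P (mB k)) (ltry 1).
    have [p PBE] : exists p, P (B k) = p%:E by apply/EFin_fin_numP.
    have p_ge0 : 0 <= p by rewrite -lee_fin -PBE measure_ge0.
    suff h : forall n, c * p < n.+1%:R^-1.
      rewrite PBE; congr EFin; apply/eqP; rewrite eq_le p_ge0 andbT.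
      rewrite leNgt; apply/negP => p_gt0.
      have cp_gt0 : 0 < c * p by rewrite mulr_gt0.
      have := h (Num.Def.trunc ((c * p)^-1)).
      have := inv_lt_of _ _ cp_gt0 (ltr0Sn R _) (truncnS_gt ((c * p)^-1)).
      move=> h1 h2; have := lt_trans h1 h2; by rewrite ltxx.
    move=> n.
    have [SW lW1 lW2] := Hnx (X, Y n) SX (SY n).
    pose V := (X \min Y n).
    have mV : measurable_fun setT V := measurable_minr (mS _ SX) (mS _ (SY n)).
    have hWV : (m <= phi V)%E.
      apply: (le_trans _ (phi_mono _ _ (mS _ SW) mV _)).
        by apply: ereal_inf_lbound; exists (nx (X, Y n)).
      apply: filterS2 lW1 lW2 => x h1 h2; rewrite /V /=.
      by rewrite le_min h1 h2.
    have mI : measurable_fun setT (fun x => (c * \1_(B k) x)%:E).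
      apply/measurable_EFinP; apply: measurable_funM => //.
    have I0 : forall x, (0 <= (c * \1_(B k) x)%:E)%E.
      move=> x; rewrite lee_fin; apply: mulr_ge0; first exact: ltW.
      by rewrite indicE.
    have hint : (\int[P]_x ((c * \1_(B k) x)%:E + (fa (V x))%:E)
                 <= phi (Y n))%E.
      apply: ge0_le_integral => //.
      - by move=> x _; rewrite adde_ge0 // lee_fin fa_ge0.
      - by apply: emeasurable_funD => //; exact: mfa.
      - exact: mfa (mS _ (SY n)).
      move=> x _; rewrite -EFinD lee_fin indicE.
      case: (boolP (x \in B k)) => [/set_mem hx|hx].
        rewrite mulr1; apply: (le_trans _ (hx n)); rewrite addrC lerD2r.
        by apply: fa_mono; rewrite /V /= ge_min lexx.
      rewrite mulr0 add0r; apply: fa_mono.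
      by rewrite /V /= ge_min lexx orbT.
    rewrite ge0_integralD // in hint; last first.
    - exact: mfa.
    - by move=> x _; rewrite lee_fin fa_ge0.
    have E1 : (\int[P]_x (c * \1_(B k) x)%:E = c%:E * P (B k))%E.
      under eq_integral do rewrite EFinM.
      rewrite ge0_integralZl_EFin ?ltW //.
      - by rewrite (integral_indic _ measurableT (mB k)) setIT.
      - by apply/measurable_EFinP; exact: measurable_indic.
    rewrite E1 in hint.
    have := lt_le_trans (le_lt_trans hint (phiY n)) (lexx _).
    move: hWV; rewrite mE PBE => hWV.
    have [r rE] : exists r, phi V = r%:E.
      apply/EFin_fin_numP; rewrite ge0_fin_numE ?phi_ge0 //.
      exact: le_lt_trans (phi_le _ mV) (ltry _).
    move: hWV; rewrite rE -EFinM -/(phi V) rE -EFinD !lte_fin lee_fin; move: (c * p) (n.+1%:R^-1) => cp e h1 h2; lra.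
  have hk : forall k, {ae P, forall x, ~ B k x}.
    move=> k; exists (B k); split; [exact: mB | exact: PB k | ].
    by move=> x /= /contrapT.
  apply: filterS (ae_foralln hk) => x hx.
  rewrite leNgt; apply/negP => hlt.
  have hle : forall n, (Rinf x <= (Y n x)%:E)%E.
    by move=> n; apply: ereal_inf_lbound; exists n.
  move: hlt (hle); case: (Rinf x) => [r| |] hlt hle'.
  + rewrite lte_fin in hlt.
    have hr : forall n, r <= Y n x by move=> n; rewrite -lee_fin hle'.
    set δ := fa r - fa (X x).
    have δ_gt0 : 0 < δ by rewrite subr_gt0 fa_lt.
    apply: (hx (Num.Def.trunc δ^-1)) => n.
    have hkk : (Num.Def.trunc δ^-1).+1%:R^-1 < δ.
      exact: inv_lt_of _ _ δ_gt0 (ltr0Sn R _) (truncnS_gt _).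
    move: hkk (fa_mono _ _ (hr n)).
    move: ((Num.Def.trunc δ^-1).+1%:R^-1) => e; rewrite /δ => h1 h2; lra.
  + by have := hle' 0%N; rewrite leye_eq.
  + by move: hlt; rewrite ltNge leNye.
- move=> W mW hW.
  apply: filterS (ae_foralln (fun n => hW _ (SY n))) => x h.
  by apply/ereal_infP => _ [n _ <-]; exact: h.
Qed.

End Essinf.
Section Gtrans.
Context {d : measure_display} {T : measurableType d} {R : realType}.
Variable G : set (set T).
Hypothesis HG : sigma_algebra setT G.

Local Notation GT := (g_sigma_algebraType G).

Lemma GsetE (A : set T) : G A <-> measurable (A : set GT).
Proof.
rewrite /measurable /=.
by rewrite sigma_algebra_id.
Qed.

Lemma GmeasE (f : T -> R) : Gmeasurable G f <-> measurable_fun (setT : set GT) f.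
Proof.
split.
  by move=> h _ B mB; rewrite setTI; apply/GsetE; exact: h.
by move=> h B mB; apply/GsetE; rewrite -[_ @^-1` _]setTI; exact: h.
Qed.

End Gtrans.

Section Split.
Context {d : measure_display} {T : measurableType d} {R : realType}.
Variable P : probability T R.

Lemma indic_split (A : set T) x (a b : R) :
  a * \1_A x + b * \1_(~` A) x = if x \in A then a else b.
Proof.
by rewrite !indicE in_setC; case: (x \in A); rewrite /= ?mulr1 ?mulr0 ?addr0 ?add0r.
Qed.

Lemma integrable_ind (f : T -> R) (A : set T) :
  measurable A -> P.-integrable setT (EFin \o f) ->
  P.-integrable setT (fun x => (f x)%:E * (\1_A x)%:E)%E.
Proof.
move=> mA If.
have mf : measurable_fun setT f by apply/measurable_EFinP; exact: measurable_int If.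
apply: (@le_integrable _ _ _ P setT measurableT _ (EFin \o f)); last exact: If.
  by apply/measurable_EFinP; apply: measurable_funM => //; exact: measurable_indic.
move=> x _; rewrite abseM /= -EFinM lee_fin indicE.
case: (x \in A); rewrite /= ?normr1 ?mulr1 ?normr0 ?mulr0 //.
Qed.

Lemma Hsplit (f g : T -> R) (A B : set T) :
  measurable A -> measurable B ->
  P.-integrable setT (EFin \o f) -> P.-integrable setT (EFin \o g) ->
  (\int[P]_(x in B) ((f x * \1_A x + g x * \1_(~` A) x)%:E) =
   \int[P]_(x in B `&` A) (f x)%:E + \int[P]_(x in B `&` ~` A) (g x)%:E)%E.
Proof.
move=> mA mB If Ig.
rewrite !integral_mkcondr !epatch_indic.
transitivity (\int[P]_(x in B) ((f x)%:E * (\1_A x)%:E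
    + (g x)%:E * (\1_(~` A) x)%:E))%E.
  by apply: eq_integral => x _.
rewrite integralD //.
  apply: (integrableS measurableT) => //; exact: integrable_ind.
apply: (integrableS measurableT) => //; apply: integrable_ind => //.
exact: measurableC.
Qed.


Lemma directed (G : set (set T)) (LF LG : set (T -> R))
  (pi : (T -> R) -> (T -> R)) (Y xi' : T -> R) :
  is_subsigma G -> vlattice_ind P measurable LF -> vlattice_ind P G LG ->
  (forall X, LF X -> LG (pi X)) ->
  (forall X X' A, LF X -> LF X' -> G A ->
     {ae P, forall x, pi (fun w => X w * indic A w + X' w * indic (~` A) w) x
                      = pi X x * indic A x + pi X' x * indic (~` A) x}) ->
  ocdual P LF xi' -> {ae P, forall x, 0 <= xi' x} ->
  down_directed P (Aset P G LF pi Y xi').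
Proof.
move=> [HG HGm] [_ _ [_ LFadd _] _ LFind] [LGm _ _ _ _] piLG REG
  [mxi Ixi0 Ixi _] xi0.
move=> _ _ [xi1 [LF1 -> [C1 [[gC1 iC1 eC1] [N1 [mN1 dN1 sN1]]]]]]
  [xi2 [LF2 -> [C2 [[gC2 iC2 eC2] [N2 [mN2 dN2 sN2]]]]]].
set A := [set x | pi xi1 x <= pi xi2 x].
have g1 := (GmeasE G HG _).1 (LGm _ (piLG _ LF1)).
have g2 := (GmeasE G HG _).1 (LGm _ (piLG _ LF2)).
have GA : G A.
  apply/(GsetE G HG _).
  have := measurable_fun_ler g1 g2 measurableT (Y:=[set true]) I.
  by rewrite setTI preimage_true.
have mA : measurable A := HGm _ GA.
have GAc : G (~` A) by apply/(GsetE G HG _); apply: measurableC; apply/(GsetE G HG _).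
have mAc : measurable (~` A) := HGm _ GAc.
pose xi3 := fun w => xi1 w * \1_A w + xi2 w * \1_(~` A) w.
have LF3 : LF xi3.
  have -> : xi3 = (fun w => \1_A w * xi1 w) \+ (fun w => \1_(~`A) w * xi2 w).
    by apply/funext => w; rewrite /xi3 /= mulrC [xi2 w * _]mulrC.
  by apply: LFadd; apply: LFind.
pose C3 := fun w => C1 w * \1_A w + C2 w * \1_(~` A) w.
have mGA : measurable (A : set (g_sigma_algebraType G)) by apply/(GsetE G HG _).
have mGAc : measurable (~` A : set (g_sigma_algebraType G)).
  by apply/(GsetE G HG _).
have hreg := REG xi1 xi2 A LF1 LF2 GA.
exists (pi xi3); last first.
  split.
    apply: filterS hreg => x h; rewrite /xi3 h indic_split.
    case: ifPn => hA //; rewrite leNgt; apply/negP => hlt; move/negP: hA; apply.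
    by apply/mem_set; rewrite /A /=; exact: ltW.
  apply: filterS hreg => x h; rewrite /xi3 h indic_split.
  by case: ifPn => hA //; move/set_mem: hA.
exists xi3; split => //; exists C3; split.
  split.
  - apply/(GmeasE G HG); apply: measurable_funD; apply: measurable_funM.
    + exact/(GmeasE G HG).
    + exact: measurable_indic.
    + exact/(GmeasE G HG).
    + exact: measurable_indic.
  - have -> : EFin \o C3 = ((fun x => (C1 x)%:E * (\1_A x)%:E) \+
        (fun x => (C2 x)%:E * (\1_(~` A) x)%:E))%E by apply/funext.
    by apply: integrableD => //; apply: integrable_ind.
  - move=> B GB; have mB := HGm _ GB.
    have GBA : G (B `&` A).
      by apply/(GsetE G HG _); apply: measurableI; apply/(GsetE G HG _).
    have GBAc : G (B `&` ~` A).
      by apply/(GsetE G HG _); apply: measurableI; apply/(GsetE G HG _).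
    rewrite (Hsplit C1 C2 _ _ mA mB iC1 iC2) (eC1 _ GBA) (eC2 _ GBAc).
    rewrite -(Hsplit _ _ _ _ mA mB (Ixi _ LF1) (Ixi _ LF2)).
    apply: eq_integral => x _; rewrite /xi3 /= !indic_split.
    by case: ifPn.
pose xp := xi' \max (cst 0).
have mxp : measurable_fun setT xp by apply: measurable_maxr.
have xp0 : forall x, 0 <= xp x by move=> x; rewrite /xp /= le_max lexx orbT.
have Ixp : P.-integrable setT (EFin \o xp).
  apply: (@le_integrable _ _ _ P setT measurableT _ (EFin \o xi')).
  - by apply/measurable_EFinP.
  - move=> x _; rewrite /= lee_fin /xp /=.
    by case: (leP 0 (xi' x)) => h; rewrite ?normr0 // ?max_l // ltW // ?max_r //.
  - exact: Ixi0.
have Exp : forall E, measurable E ->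
    dens_measure P xi' E = (\int[P]_(x in E) (xp x)%:E)%E.
  move=> E mE; apply: ae_eq_integral => //.
  - apply/measurable_EFinP; exact: measurable_funS mxi.
  - apply/measurable_EFinP; exact: measurable_funS mxp.
  - by apply: filterS xi0 => x h _; rewrite /xp /= max_l.
exists ((N1 `&` A) `|` (N2 `&` ~` A)); split.
- by apply: measurableU; apply: measurableI.
- have mN : measurable ((N1 `&` A) `|` (N2 `&` ~` A)).
    by apply: measurableU; apply: measurableI.
  rewrite Exp //.
  transitivity (\int[P]_(x in (N1 `&` A) `|` (N2 `&` ~` A))
     ((xp x * \1_A x + xp x * \1_(~` A) x)%:E))%E.
    by apply: eq_integral => x _; rewrite indic_split; case: ifPn.
  rewrite Hsplit //.
  have z1 : (\int[P]_(x in ((N1 `&` A) `|` (N2 `&` ~` A)) `&` A) (xp x)%:E = 0)%E.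
    apply/eqP; rewrite eq_le integral_ge0 ?andbT; last first.
      by move=> x _; rewrite lee_fin.
    rewrite -dN1 Exp //; apply: ge0_subset_integral => //.
    + exact: measurableI.
    + by apply/measurable_EFinP; exact: measurable_funS mxp.
    + by move=> x _; rewrite lee_fin.
    + by move=> x [[[]|[_ ?]]].
  have z2 : (\int[P]_(x in ((N1 `&` A) `|` (N2 `&` ~` A)) `&` ~` A) (xp x)%:E = 0)%E.
    apply/eqP; rewrite eq_le integral_ge0 ?andbT; last first.
      by move=> x _; rewrite lee_fin.
    rewrite -dN2 Exp //; apply: ge0_subset_integral => //.
    + exact: measurableI.
    + by apply/measurable_EFinP; exact: measurable_funS mxp.
    + by move=> x _; rewrite lee_fin.
    + by move=> x [[[]|[]]].
  by rewrite z1 z2 adde0.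
- move=> x /=; rewrite /C3 indic_split.
  case: ifPn => hA hx.
    by left; split; [apply: sN1 | exact/set_mem].
  by right; split; [apply: sN2 | move=> ax; move/negP: hA; apply; exact/mem_set].
Qed.

End Split.

Theorem lemma17 (d : measure_display) (T : measurableType d) (R : realType)
  (P : probability T R) (G : set (set T))
  (LF LG : set (T -> R)) (pi : (T -> R) -> (T -> R))
  (Y xi' : T -> R) :
  is_subsigma G ->
  vlattice_ind P measurable LF ->
  vlattice_ind P G LG ->
  (* standing assumptions on the order continuous dual *)
  (forall Z1 Z2, ocdual P LF Z1 -> ocdual P LF Z2 ->
     ocdual P LF (fun x => Num.max (Z1 x) (Z2 x)) /\
     ocdual P LF (fun x => Num.min (Z1 x) (Z2 x))) ->
  (forall Z A, ocdual P LF Z -> measurable A ->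
     ocdual P LF (fun x => indic A x * Z x)) ->
  (* pi : L_F -> L_G, well defined on a.s.-classes *)
  (forall X, LF X -> LG (pi X)) ->
  (forall X X', LF X -> LF X' -> {ae P, forall x, X x = X' x} ->
     {ae P, forall x, pi X x = pi X' x}) ->
  (* (REG) *)
  (forall X X' A, LF X -> LF X' -> G A ->
     {ae P, forall x, pi (fun w => X w * indic A w + X' w * indic (~` A) w) x
                      = pi X x * indic A x + pi X' x * indic (~` A) x}) ->
  (* Y in L^0(G), xi' in L^*_F with xi' >= 0 *)
  Gmeasurable G Y ->
  ocdual P LF xi' ->
  {ae P, forall x, 0 <= xi' x} ->
  down_directed P (Aset P G LF pi Y xi') /\
  (Aset P G LF pi Y xi' !=set0 ->
   exists eta : nat -> T -> R,
     [/\ (forall m, LF (eta m) /\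
           exists C, is_condexp P G (xi' \* eta m) C /\
             ae_wrt (dens_measure P xi') (fun x => Y x <= C x)),
         {ae P, forall x, forall m, pi (eta m.+1) x <= pi (eta m) x} &
         exists Rinf : T -> \bar R,
           is_essinf P (Aset P G LF pi Y xi') Rinf /\
           {ae P, forall x, (fun m => (pi (eta m) x)%:E) @ \oo --> Rinf x}]).
Proof.
move=> HGs HLF HLG _ _ piLG _ REG _ oxi xi0.
have Hdir := @directed _ _ _ P G LF LG pi Y xi' HGs HLF HLG piLG REG oxi xi0.
split => // Hne.
have mS : forall X, Aset P G LF pi Y xi' X -> measurable_fun setT X.
  move=> _ [xi [LFxi -> _]].
  have h : Gmeasurable G (pi xi) by case: HLG => + _ _ _ _; apply; exact: piLG.
  move=> _ B mB; rewrite setTI; apply: HGs.2; exact: h.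
have [Yn [SY dec [Rinf [ess cvg]]]] := essinf_seq P _ mS Hdir Hne.
have hx : forall m, exists xi, LF xi /\ Yn m = pi xi /\
    exists C, is_condexp P G (xi' \* xi) C /\
             ae_wrt (dens_measure P xi') (fun x => Y x <= C x).
  move=> m; have [xi [h1 h2 h3]] := SY m; by exists xi.
have [eta Heta] := choice hx.
exists eta; split.
- by move=> m; have [h1 [_ h3]] := Heta m.
- apply: filterS dec => x h m.
  by rewrite -(Heta m).2.1 -(Heta m.+1).2.1; exact: h.
- exists Rinf; split => //; apply: filterS cvg => x h.
  have -> : (fun m => (pi (eta m) x)%:E) = (fun m => (Yn m x)%:E).
    by apply/funext => m; rewrite -(Heta m).2.1.
  exact: h.
Qed.
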